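(* Every natural-number-valued sequence $F$ in the family $\mathcal{T}_\lambda(\alpha,\beta)$ (restricted to its terms $n_F$, $n\ge1$) belongs to $\mathcal{T}_\lambda$; consequently every such $F$ is a cobweb tiling sequence. Moreover the inclusion $\mathcal{T}_\lambda(\alpha,\beta)\subset\mathcal{T}_\lambda$ is proper: the Fibonacci sequence belongs to $\mathcal{T}_\lambda$ but not to $\mathcal{T}_\lambda(\alpha,\beta)$.
   Context: Throughout, $\mathbb{N}=\{1,2,\dots\}$. The family $\mathcal{T}_\lambda$ consists of sequences $F=(n_F)_{n\ge1}$ of natural numbers for which there exist functions $\lambda_K,\lambda_M:\mathbb{N}\times\mathbb{N}\to\mathbb{N}\cup\{0\}$ such that $(k+m)_F=\lambda_K(k,m)k_F+\lambda_M(k,m)m_F$ for all $k,m\in\mathbb{N}$. The family $\mathcal{T}_\lambda(\alpha,\beta)$ consists of sequences with $n_F=[x^n]\frac{1_F\,x}{(1-\alpha x)(1-\beta x)}$, for some $\alpha,\beta\in\mathbb{N}\cup\{0\}$ and $1_F\in\mathbb{N}$. The Fibonacci sequence is $F_0=0$, $F_1=F_2=1$, $F_{n+1}=F_n+F_{n-1}$. For a sequence $F$ of natural numbers, write $[s_F]=\{1,\dots,s_F\}$, $n_F!=n_F\cdots1_F$ with $0_F!=1$, and $\binom{n}{m}_F=\frac{n_F!}{m_F!(n-m)_F!}$. $F$ is admissible if all $\binom{n}{m}_F\in\mathbb{N}\cup\{0\}$. For $1\le m\le n$ and $k=n-m+1$, the $F$-box is $V_{m,n}=[k_F]\times\cdots\times[n_F]$.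 A sub-box of the form $\sigma V_m$ ($\sigma$ a permutation of $\{1,\dots,m\}$) is $A_1\times\cdots\times A_m$ with $A_s\subseteq[(k+s-1)_F]$ and $|A_s|=(\sigma(s))_F$. A tiling of $V_{m,n}$ is a family of pairwise disjoint such sub-boxes ($\sigma$ may vary) with union $V_{m,n}$. $F$ is a cobweb tiling sequence if it is admissible and every $V_{m,n}$, $1\le m\le n$, has a tiling. *)

(* Defs.v *)
From mathcomp Require Import all_boot fingroup perm.
Set Implicit Arguments. Unset Strict Implicit. Unset Printing Implicit Defensive.

(* A sequence F = (n_F)_{n>=1} is modelled as F : nat -> nat; the value F 0 is
   irrelevant and never used. *)

(* Positivity: the terms n_F, n >= 1, are natural numbers (N = {1,2,...}). *)
Definition nat_valued (F : nat -> nat) : Prop := forall n, 0 < n -> 0 < F n.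

Definition in_Tlambda (F : nat -> nat) : Prop :=
  nat_valued F /\
  exists (lK lM : nat -> nat -> nat),
    forall k m, 0 < k -> 0 < m -> F (k + m) = lK k m * F k + lM k m * F m.

(* [x^n] (c x / ((1 - a x)(1 - b x))) = c * sum_{i+j = n-1} a^i b^j, n >= 1. *)
Definition Tab_coef (a b c n : nat) : nat :=
  c * \sum_(i < n) a ^ i * b ^ (n.-1 - i).

(* The family T_lambda(alpha,beta) (union over alpha, beta in N u {0}, 1_F in N). *)
Definition in_Tab (F : nat -> nat) : Prop :=
  exists a b c : nat, 0 < c /\ forall n, 0 < n -> F n = Tab_coef a b c n.

Fixpoint fib (n : nat) : nat :=
  match n with
  | 0 => 0
  | 1 => 1
  | (m.+1 as p).+1 => fib p + fib m
  end.

Definition Ffact (F : nat -> nat) (n : nat) : nat := \prod_(1 <= i < n.+1) F i.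

(* Admissible: every F-binomial (n choose m)_F, 0 <= m <= n, is a natural
   number (or 0), i.e. m_F! (n-m)_F! divides n_F!. *)
Definition admissible (F : nat -> nat) : Prop :=
  forall n m, m <= n -> Ffact F m * Ffact F (n - m) %| Ffact F n.

(* A candidate box with m coordinates: coordinate s (0-indexed, i.e. s+1 in
   the paper) is given by a list A s of natural numbers. *)
Definition box (m : nat) := {ffun 'I_m -> seq nat}.

Definition in_box m (A : box m) (x : 'I_m -> nat) : Prop :=
  forall s : 'I_m, x s \in A s.

(* x lies in V_{m,n} = [k_F] x ... x [n_F], k = n - m + 1: coordinate s
   (0-indexed) ranges over [(k+s)_F] = {1, ..., (k+s)_F}. *)
Definition in_V (F : nat -> nat) m n (x : 'I_m -> nat) : Prop :=
  forall s : 'I_m, 1 <= x s <= F (n - m + 1 + s).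

(* A is a sub-box of V_{m,n} of the form sigma V_m: A_s is a subset of
   [(k+s-1)_F] with |A_s| = (sigma(s))_F (paper's 1-indexed s). *)
Definition is_subbox (F : nat -> nat) (m n : nat) (A : box m) : Prop :=
  exists sigma : 'S_m, forall s : 'I_m,
    [/\ uniq (A s),
        all (fun a => 1 <= a <= F (n - m + 1 + s)) (A s)
      & size (A s) = F (sigma s).+1].

Arguments is_subbox F m n A : clear implicits.
Arguments in_V F m n x : clear implicits.

Definition has_tiling (F : nat -> nat) m n : Prop :=
  exists T : seq (box m),
    [/\ forall A, A \in T -> is_subbox F m n A,
        forall i j, i < size T -> j < size T -> i != j ->
          forall x, ~ (in_box (nth [ffun => [::]] T i) x /\
                       in_box (nth [ffun => [::]] T j) x)
      & forall x, in_V F m n x <-> exists2 A, A \in T & in_box A x].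

Definition cobweb_tiling (F : nat -> nat) : Prop :=
  admissible F /\ forall m n, 1 <= m -> m <= n -> has_tiling F m n.

(* Main.v *)
Require Import Defs.
From mathcomp Require Import all_boot fingroup perm.
From mathcomp Require Import zify.
Set Implicit Arguments. Unset Strict Implicit. Unset Printing Implicit Defensive.

Definition inb m (B : nat -> seq nat) (x : nat -> nat) : bool :=
  all (fun s => x s \in B s) (iota 0 m).
Definition inR m (lo len : nat -> nat) (x : nat -> nat) : bool :=
  all (fun s => lo s < x s <= lo s + len s) (iota 0 m).
Definition injm m (sg : nat -> nat) : Prop :=
  (forall s, s < m -> sg s < m) /\ (forall s t, s < m -> t < m -> sg s = sg t -> s = t).
Definition tile_ok (F : nat -> nat) m (lo len : nat -> nat) (B : nat -> seq nat) : Prop :=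
  (forall s, s < m -> uniq (B s) /\ all (fun a => lo s < a <= lo s + len s) (B s)) /\
  exists sg, injm m sg /\ forall s, s < m -> size (B s) = F (sg s).+1.
Definition Til F m lo len : Prop := exists T : seq (nat -> seq nat),
  (forall B, List.In B T -> tile_ok F m lo len B) /\
  forall x, count (fun B => inb m B x) T = inR m lo len x.
Definition upd (f : nat -> nat) (k v : nat) := fun s => if s == k then v else f s.

Lemma count_cst_and T (c : bool) (a : pred T) s :
  count (fun B => c && a B) s = c * count a s.
Proof. elim: s => [|y s IH] /=; first by rewrite muln0. rewrite IH; case: (c) => /=; lia. Qed.

Lemma count_ext T (a1 a2 : pred T) s :
  (forall x, List.In x s -> a1 x = a2 x) -> count a1 s = count a2 s.
Proof.
elim: s => //= y s IH H; rewrite H; last by left.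
by rewrite IH // => x Hx; apply: H; right.
Qed.

Lemma all_iota_ext (P Q : pred nat) m :
  (forall s, s < m -> P s = Q s) -> all P (iota 0 m) = all Q (iota 0 m).
Proof. move=> H; apply: eq_in_all => s; rewrite mem_iota => /andP[_]; exact: H. Qed.

Lemma iotaS0 m : iota 0 m.+1 = iota 0 m ++ [:: m].
Proof. by rewrite -addn1 iotaD. Qed.

Lemma inR_upd m lo len a l x :
  inR m.+1 (upd lo m a) (upd len m l) x = inR m lo len x && (a < x m <= a + l).
Proof.
rewrite /inR iotaS0 all_cat /= andbT /upd eqxx; congr (_ && _).
apply: all_iota_ext => s hs; by rewrite (ltn_eqF hs).
Qed.

Lemma tile_ok_mono F m lo len lo' len' B :
  (forall s, s < m -> lo' s <= lo s /\ lo s + len s <= lo' s + len' s) ->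
  tile_ok F m lo len B -> tile_ok F m lo' len' B.
Proof.
move=> H [H1 H2]; split=> // s hs; have [u a] := H1 s hs; split=> //.
apply: sub_all a => y /andP[h1 h2]; have [h3 h4] := H s hs; apply/andP; split; lia.
Qed.

Lemma Til_ext F m lo len lo' len' :
  (forall s, s < m -> lo s = lo' s /\ len s = len' s) ->
  Til F m lo len -> Til F m lo' len'.
Proof.
move=> H [T [H1 H2]]; exists T; split.
  move=> B /H1; apply: tile_ok_mono => s /H [-> ->]; by [].
move=> x; rewrite H2 /inR; congr nat_of_bool; apply: all_iota_ext => s /H [-> ->] //.
Qed.

Lemma Til_single F m lo len sg :
  injm m sg -> (forall s, s < m -> len s = F (sg s).+1) -> Til F m lo len.
Proof.
move=> Hs Hl; exists [:: fun s => iota (lo s).+1 (len s)]; split.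
  move=> B [<-|//]; split; last by exists sg; split => // s hs; rewrite size_iota Hl.
  move=> s hs; rewrite iota_uniq; split => //; apply/allP => y; rewrite mem_iota.
  move=> /andP[h1 h2]; apply/andP; split; lia.
move=> x /=; rewrite addn0; congr nat_of_bool; apply: all_iota_ext => s _.
rewrite mem_iota; apply/andP/andP => [][h1 h2]; split; lia.
Qed.

Lemma Til_empty F m lo len o : Til F m.+1 (upd lo m o) (upd len m 0).
Proof.
exists [::]; split => // x /=; rewrite inR_upd addn0.
by case: (o < x m) (leqNgt (x m) o) => -> ; rewrite !andbF.
Qed.

Lemma Til_union F m lo len o L1 L2 :
  Til F m.+1 (upd lo m o) (upd len m L1) ->
  Til F m.+1 (upd lo m (o + L1)) (upd len m L2) ->
  Til F m.+1 (upd lo m o) (upd len m (L1 + L2)).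
Proof.
move=> [T1 [H1 K1]] [T2 [H2 K2]]; exists (T1 ++ T2); split.
  move=> B /List.in_app_iff [/H1|/H2]; apply: tile_ok_mono => s hs;
    rewrite /upd; case: eqP => _; lia.
move=> x; rewrite count_cat K1 K2 !inR_upd.
case: (inR m lo len x) => //=.
case: (ltnP o (x m)) => h1; case: (leqP (x m) (o + L1)) => h2;
case: (ltnP (o + L1) (x m)) => h3; case: (leqP (x m) (o + L1 + L2)) => h4;
rewrite /= ?addnA //; lia.
Qed.

Lemma Til_iter F m lo len L c : forall o,
  (forall j, j < c -> Til F m.+1 (upd lo m (o + j * L)) (upd len m L)) ->
  Til F m.+1 (upd lo m o) (upd len m (c * L)).
Proof.
elim: c => [|c IH] o H; first exact: Til_empty.
rewrite mulSn; apply: Til_union; first by have := H 0 erefl; rewrite mul0n addn0.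
apply: IH => j hj; have := H j.+1 hj; by rewrite mulSn addnA.
Qed.

Lemma Til_prod F m lo len o :
  Til F m lo len -> Til F m.+1 (upd lo m o) (upd len m (F m.+1)).
Proof.
move=> [T [H1 H2]].
pose ext (B : nat -> seq nat) := fun s => if s < m then B s else iota o.+1 (F m.+1).
exists (map ext T); split.
  move=> B' /List.in_map_iff [B [<- /H1 [Hb [sg [[Hs1 Hs2] Hsz]]]]]; split.
    move=> s hs; rewrite /ext /upd; case: ltnP => h.
      by rewrite (ltn_eqF h); exact: Hb.
    have -> : s = m by lia.
    rewrite eqxx iota_uniq; split => //; apply/allP => y; rewrite mem_iota.
    move=> /andP[h1 h2]; apply/andP; split; lia.
  exists (fun s => if s == m then m else sg s); split.
    split => [s hs|s t hs ht].
      case: (s =P m) => hsm //; have := Hs1 s; lia.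
    case: (s =P m) => hsm; case: (t =P m) => htm; try lia.
    - move=> e; have := Hs1 t; lia.
    - move=> e; have := Hs1 s; lia.
    - apply: Hs2; lia.
  move=> s hs; rewrite /ext; case: eqP => [->|hsm]; first by rewrite ltnn size_iota.
  have h : s < m by lia. by rewrite h Hsz.
move=> x; rewrite count_map inR_upd.
have -> : (o < x m <= o + F m.+1) = (x m \in iota o.+1 (F m.+1)).
  by rewrite mem_iota; apply/andP/andP => [][h1 h2]; split; lia.
rewrite (@eq_count _ _ (fun B => (x m \in iota o.+1 (F m.+1)) && inb m B x)).
  by rewrite count_cst_and H2; case: (x m \in _); case: (inR _ _ _ _).
move=> B /=.
rewrite /inb iotaS0 all_cat /= andbT /ext ltnn andbC; congr (_ && _).
by apply: all_iota_ext => s hs; rewrite hs.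
Qed.

Lemma all_reindex m (pi pii : nat -> nat) (P : pred nat) :
  (forall s, s < m -> pi s < m) -> (forall s, s < m -> pii s < m) ->
  (forall s, s < m -> pi (pii s) = s) ->
  all P (iota 0 m) = all (fun s => P (pi s)) (iota 0 m).
Proof.
move=> h1 h2 h3; apply/allP/allP => H s; rewrite mem_iota => /andP[_ hs].
  by apply: H; rewrite mem_iota h1.
by rewrite -(h3 s hs); apply: H; rewrite mem_iota h2.
Qed.

Lemma memadd (l : seq nat) c z : all (fun a => 0 < a) l ->
  (z \in map (addn c) l) = (c < z) && (z - c \in l).
Proof.
move=> Hl; case: ltnP => h /=.
  by rewrite -{1}(subnKC (ltnW h)) mem_map //; exact: addnI.
apply/negbTE/negP => /mapP [a ha e]; move/allP: Hl => /(_ a ha); lia.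
Qed.

Lemma Til_rot F m len lo' pi pii :
  (forall s, s < m -> pi s < m) -> (forall s, s < m -> pii s < m) ->
  (forall s, s < m -> pi (pii s) = s) -> (forall s, s < m -> pii (pi s) = s) ->
  Til F m (fun _ => 0) len -> Til F m lo' (fun s => len (pi s)).
Proof.
move=> h1 h2 h3 h4 [T [H1 H2]].
pose rot (B : nat -> seq nat) := fun s => map (addn (lo' s)) (B (pi s)).
exists (map rot T); split.
  move=> B' /List.in_map_iff [B [<- /H1 [Hb [sg [[Hs1 Hs2] Hsz]]]]]; split.
    move=> s hs; have [u a] := Hb _ (h1 s hs); split.
      by rewrite map_inj_uniq //; exact: addnI.
    rewrite all_map; apply: sub_all a => y /andP[a1 a2] /=; apply/andP; split; lia.
  exists (fun s => sg (pi s)); split.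
    split => [s hs|s t hs ht e]; first by apply: Hs1; apply: h1.
    by rewrite -(h4 s hs) -(h4 t ht) (Hs2 _ _ (h1 s hs) (h1 t ht) e).
  by move=> s hs; rewrite size_map Hsz // h1.
move=> x; rewrite count_map.
pose g := all (fun s => lo' s < x s) (iota 0 m).
pose y := fun t => x (pii t) - lo' (pii t).
rewrite (@count_ext _ _ (fun B => g && inb m B y)).
  rewrite count_cst_and H2.
  have -> : inR m lo' (fun s => len (pi s)) x = g && inR m (fun _ => 0) len y.
    rewrite /inR [X in _ && X](all_reindex _ h1 h2 h3) /g -all_predI; apply: all_iota_ext => s hs /=.
    rewrite /y h4 //; apply/andP/andP => [][a b]; [split => //; lia|].
    move/andP: b => [b c]; split; lia.
  by case: g; case: (inR _ _ _ _).
move=> B /H1 [Hb _]; rewrite /= /inb [X in _ && X](all_reindex _ h1 h2 h3) /g -all_predI.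
apply: all_iota_ext => s hs /=; rewrite /y h4 // /rot memadd //.
have [_ a] := Hb _ (h1 s hs); apply: sub_all a => z /andP[]; by [].
Qed.

Lemma injm_id m : injm m id.
Proof. by split. Qed.

Lemma Tl_tiles F (lK lM : nat -> nat -> nat) :
  (forall k m, 0 < k -> 0 < m -> F (k + m) = lK k m * F k + lM k m * F m) ->
  forall n m, m <= n -> Til F m (fun _ => 0) (fun s => F (n - m + 1 + s)).
Proof.
move=> HF; elim=> [|n IH] m hm.
  apply: (@Til_single _ _ _ _ id) => //; lia.
have [m0|mpos] := posnP m.
  by subst m; apply: (@Til_single _ _ _ _ id).
case: (eqVneq m n.+1) => [->|hmn].
  apply: (@Til_single _ _ _ _ id) => // s _; congr F; lia.
case: m mpos hm hmn => [//|m'] _ hm hmn.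
have hm' : m' < n by lia.
set k := n - m'.
set base := fun s => F (n - m' + 1 + s).
have E : F n.+1 = lK k m'.+1 * F k + lM k m'.+1 * F m'.+1.
  rewrite -HF; [congr F|..]; rewrite /k; lia.
have T1 : Til F m'.+1 (upd (fun _ => 0) m' 0) (upd base m' (lM k m'.+1 * F m'.+1)).
  apply: Til_iter => j _; exact: Til_prod (IH m' (ltnW hm')).
have T2 : Til F m'.+1 (upd (fun _ => 0) m' (0 + lM k m'.+1 * F m'.+1))
                      (upd base m' (lK k m'.+1 * F k)).
  have p1 : forall s, s < m'.+1 -> (if s == m' then 0 else s.+1) < m'.+1.
    move=> s hs; case: eqP; lia.
  have p2 : forall s, s < m'.+1 -> (if s == 0 then m' else s.-1) < m'.+1.
    move=> s hs; case: eqP; lia.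
  have p3 : forall s, s < m'.+1 -> (fun s => if s == m' then 0 else s.+1)
                 ((fun t => if t == 0 then m' else t.-1) s) = s.
    move=> s; case: s => [|s] hs /=; [by rewrite eqxx | by rewrite ltn_eqF].
  have p4 : forall s, s < m'.+1 -> (fun t => if t == 0 then m' else t.-1)
                 ((fun s => if s == m' then 0 else s.+1) s) = s.
    move=> s hs /=; case: (eqVneq s m') => [->|h] //=.
  apply: Til_iter => j _.
  have R := @Til_rot _ _ _ (upd (fun _ => 0) m' (0 + lM k m'.+1 * F m'.+1 + j * F k))
     _ _ p1 p2 p3 p4 (IH m'.+1 hm').
  apply: Til_ext R.
  move=> s hs; split => //; rewrite /upd /base; case: (s =P m') => h; [subst s|]; congr F; rewrite /k; lia.
have := Til_union T1 T2; apply: Til_ext => s hs; rewrite /upd; split.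
  by case: eqP.
case: eqP => [->|h]; last by rewrite /base; congr F; lia.
rewrite addnC -E; congr F; lia.
Qed.

Lemma Ffact0 F : Ffact F 0 = 1.
Proof. by rewrite /Ffact big_geq. Qed.

Lemma FfactS F n : Ffact F n.+1 = Ffact F n * F n.+1.
Proof. by rewrite /Ffact big_nat_recr. Qed.

Lemma Tl_adm F (lK lM : nat -> nat -> nat) :
  (forall k m, 0 < k -> 0 < m -> F (k + m) = lK k m * F k + lM k m * F m) ->
  admissible F.
Proof.
move=> HF; elim=> [|n IH] m hm.
  have -> : m = 0 by lia. by rewrite Ffact0.
have [->|mpos] := posnP m; first by rewrite Ffact0 mul1n subn0.
case: (eqVneq m n.+1) => [->|hmn]; first by rewrite subnn Ffact0 muln1.
case: m mpos hm hmn => [//|m'] _ hm hmn.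
have hm' : m' < n by lia.
set k := n.+1 - m'.+1.
have hk : k = (n - m').-1.+1 by rewrite /k; lia.
rewrite [Ffact F n.+1]FfactS.
have -> : F n.+1 = lK k m'.+1 * F k + lM k m'.+1 * F m'.+1.
  rewrite -HF; [congr F|..]; rewrite /k; lia.
rewrite mulnDr; apply: dvdn_add.
  rewrite mulnCA; apply: dvdn_mull.
  have e : k = (n - m'.+1).+1 by rewrite /k; lia.
  have -> : Ffact F k = Ffact F (n - m'.+1) * F k by rewrite {1}e FfactS -e.
  rewrite mulnA.
  by apply: dvdn_mul => //; apply: IH.
rewrite mulnCA; apply: dvdn_mull.
have e : k = n - m' by rewrite /k.
rewrite FfactS mulnAC.
by apply: dvdn_mul => //; rewrite e; apply: IH; lia.
Qed.

Lemma Tab_rec a b c k m : 0 < k -> 0 < m ->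
  Tab_coef a b c (k + m) = b ^ m * Tab_coef a b c k + a ^ k * Tab_coef a b c m.
Proof.
move=> hk hm; rewrite /Tab_coef big_split_ord /= mulnDr; congr (_ + _).
  rewrite mulnCA; congr (c * _); rewrite big_distrr /=; apply: eq_bigr => i _ /=.
  rewrite mulnCA -expnD; congr (_ * _ ^ _); have := ltn_ord i; lia.
rewrite mulnCA; congr (c * _); rewrite big_distrr /=; apply: eq_bigr => i _ /=.
rewrite expnD -mulnA; congr (_ * (_ * _ ^ _)); have := ltn_ord i; lia.
Qed.

Lemma fibSS n : fib n.+2 = fib n.+1 + fib n.
Proof. by []. Qed.

Lemma fib_add k : forall m, fib (k.+1 + m) = fib k.+1 * fib m.+1 + fib k * fib m.
Proof.
suff H : forall k, (forall m, fib (k.+1 + m) = fib k.+1 * fib m.+1 + fib k * fib m) /\ (forall m, fib (k.+2 + m) = fib k.+2 * fib m.+1 + fib k.+1 * fib m).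
  exact: (H k).1.
move=> k0; elim: k0 => [|j [IH1 IH2]].
  split => m; first by rewrite add1n /=; lia.
  by rewrite (_ : 2 + m = m.+2) // fibSS /=; lia.
split => // m.
rewrite (_ : j.+3 + m = (j.+1 + m).+2); last by lia.
rewrite fibSS -addSn IH2 IH1 (fibSS j.+1).
have := fibSS j; nia.
Qed.

Lemma fib_pos n : 0 < n -> 0 < fib n.
Proof.
elim: n {-2}n (leqnn n) => [|n IH] j hj hj0; first by lia.
case: j hj hj0 => [//|[|j]] hj _ //.
rewrite fibSS; have := IH j.+1 hj erefl; lia.
Qed.

Lemma fib_Tl : in_Tlambda fib.
Proof.
split; first exact: fib_pos.
exists (fun k m => fib m.+1), (fun k m => fib k.-1) => k m hk hm.
case: k hk => [//|k] _; rewrite fib_add /=; lia.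
Qed.

Lemma fib_notTab : ~ in_Tab fib.
Proof.
move=> [a [b [c [hc H]]]].
have h1 := H 1 erefl; have h2 := H 2 erefl; have h3 := H 3 erefl.
move: h1 h2 h3; rewrite /Tab_coef !big_ord_recl !big_ord0 /=.
rewrite /bump /=.
clear H; case: a => [|[|a]]; case: b => [|[|b]]; rewrite /= ?expn0 ?exp0n ?exp1n //; rewrite ?subn0 ?expn1; nia.
Qed.

Definition conv m (B : nat -> seq nat) : box m := [ffun s : 'I_m => B (val s)].
Definition xn m (x : 'I_m -> nat) : nat -> nat := fun k => oapp x 0 (insub k).

Lemma xnE m (x : 'I_m -> nat) (s : 'I_m) : xn x (val s) = x s.
Proof. by rewrite /xn valK. Qed.

Lemma all_ord m (P : pred nat) : all P (iota 0 m) <-> forall s : 'I_m, P s.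
Proof.
split => [/allP H s|H]; first by apply: H; rewrite mem_iota ltn_ord.
apply/allP => s; rewrite mem_iota => /andP[_ hs]; exact: (H (Ordinal hs)).
Qed.

Lemma inb_box m B (x : 'I_m -> nat) : inb m B (xn x) <-> in_box (conv m B) x.
Proof.
rewrite /inb all_ord /in_box; split => H s; move: (H s); by rewrite ffunE xnE.
Qed.

Lemma inR_V F m n (x : 'I_m -> nat) :
  inR m (fun _ => 0) (fun s => F (n - m + 1 + s)) (xn x) <-> in_V F m n x.
Proof. by rewrite /inR all_ord /in_V; split => H s; move: (H s); rewrite xnE. Qed.

Lemma L1 m A (T : seq (nat -> seq nat)) :
  A \in map (conv m) T -> exists B, List.In B T /\ A = conv m B.
Proof.
elim: T => //= B T IH; rewrite in_cons => /orP [/eqP ->|/IH [B' [h ->]]].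
  by exists B; split => //; left.
by exists B'; split => //; right.
Qed.

Lemma L2 m B (T : seq (nat -> seq nat)) :
  List.In B T -> conv m B \in map (conv m) T.
Proof.
elim: T => //= B' T IH [->|h]; rewrite in_cons; first by rewrite eqxx.
by rewrite IH // orbT.
Qed.

Lemma L3 X (a : pred X) T : has a T -> exists B, List.In B T /\ a B.
Proof.
elim: T => //= B T IH /orP [h|/IH [B' [h1 h2]]]; first by exists B; split => //; left.
by exists B'; split => //; right.
Qed.

Lemma L4 X (a : pred X) d T : forall i j, count a T <= 1 -> i < size T -> j < size T ->
  i != j -> a (nth d T i) -> a (nth d T j) -> False.
Proof.
elim: T => //= y T IH [|i] [|j] //= hc hi hj hij hA hB.
- rewrite hA in hc; have : 0 < count a T by rewrite -has_count; apply/(has_nthP d); exists j.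
  lia.
- rewrite hB in hc; have : 0 < count a T by rewrite -has_count; apply/(has_nthP d); exists i.
  lia.
- apply: (IH i j) => //; lia.
Qed.

Lemma L5 X (a : pred X) B T : List.In B T -> a B -> 0 < count a T.
Proof. elim: T => //= y T IH [->|h] hB; [rewrite hB; lia | have := IH h hB; lia]. Qed.

Lemma Til_has F m n : Til F m (fun _ => 0) (fun s => F (n - m + 1 + s)) -> has_tiling F m n.
Proof.
move=> [T [H1 H2]]; exists (map (conv m) T); split.
- move=> A /L1 [B [/H1 [Hb [sg [[Hs1 Hs2] Hsz]]] ->]].
  pose f := fun s : 'I_m => Ordinal (Hs1 s (ltn_ord s)).
  have finj : injective f.
    move=> s t /(congr1 val) /= e; apply: val_inj; exact: Hs2 _ _ (ltn_ord s) (ltn_ord t) e.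
  exists (perm finj) => s; rewrite permE ffunE /=.
  have [u a] := Hb _ (ltn_ord s); split => //; last exact: Hsz.
- move=> i j; rewrite size_map => hi hj hij x [hA hB].
  apply: (@L4 _ (fun B => inb m B (xn x)) (fun _ => [::]) T i j) => //.
  + by rewrite H2; case: (inR _ _ _ _).
  + by apply/inb_box; rewrite -(nth_map _ [ffun => [::]]).
  + by apply/inb_box; rewrite -(nth_map _ [ffun => [::]]).
- move=> x; rewrite -inR_V; have e := H2 (xn x); split.
    move=> h; have : has (fun B => inb m B (xn x)) T by rewrite has_count e h.
    move/L3 => [B [hB hx]]; exists (conv m B); first exact: L2.
    exact/inb_box.
  move=> [A /L1 [B [hB ->]] /inb_box hx].
  have := @L5 _ (fun B => inb m B (xn x)) _ _ hB hx; rewrite e; by case: (inR _ _ _ _).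
Qed.

Lemma Tl_cobweb F : in_Tlambda F -> cobweb_tiling F.
Proof.
move=> [_ [lK [lM H]]]; split; first exact: Tl_adm H.
move=> m n _ hmn; apply: Til_has; exact: Tl_tiles H n m hmn.
Qed.

Theorem corollary6 :
  (forall F : nat -> nat, in_Tab F -> nat_valued F ->
     in_Tlambda F /\ cobweb_tiling F)
  /\ in_Tlambda fib /\ ~ in_Tab fib.
Proof.
split; last by split; [exact: fib_Tl | exact: fib_notTab].
move=> F [a [b [c [hc HF]]]] hpos.
have TL : in_Tlambda F.
  split => //; exists (fun k m => b ^ m), (fun k m => a ^ k) => k m hk hm.
  rewrite !HF ?Tab_rec //; lia.
by split => //; exact: Tl_cobweb.
Qed.
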